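(* There exist absolute constants $C,c>0$ such that for every integer $v\ge0$ and real $\lambda\ge\frac12$: \begin{enumerate} \item if $v\ge\lambda$, then $c(v+\lambda)^{-1}\exp(\Psi_{v,\lambda})\le E_{v,\lambda}\le C(v+\lambda)\exp(\Psi_{v,\lambda})$; \item if $v\le\lambda$, then $c(v+\lambda)^{-1}\exp(\Psi_{v,\lambda})\le E_{v,\lambda}\le C\lambda^{-1/2}\exp(\Psi_{v,\lambda})$. \end{enumerate}
   Context: For integer $v\ge0$ and real $\lambda>0$ define $E_{v,\lambda}=\sum_{n\ge v,\ n-v\in2\mathbb{Z}}\frac{\lambda^n}{2^n n!}\binom{n}{(n-v)/2}$ and $\Psi_{v,\lambda}=\sqrt{v^2+\lambda^2}+v\log\Big(\frac{\sqrt{v^2+\lambda^2}-v}{\lambda}\Big)$ (natural logarithm). *)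

(* Defs.v *)
From Stdlib Require Import Reals Lra Lia.
From Coquelicot Require Import Coquelicot.
Open Scope R_scope.

(* k-th term of E_{v,lambda}: the summation index is n = v + 2k (n >= v, n - v even),
   and (n - v)/2 = k. *)
Definition E_term (v : nat) (lam : R) (k : nat) : R :=
  let n := (v + 2 * k)%nat in
  lam ^ n / (2 ^ n * INR (Factorial.fact n)) * Binomial.C n k.

Definition E (v : nat) (lam : R) : R := Series (E_term v lam).

Definition Psi (v : nat) (lam : R) : R :=
  sqrt (INR v ^ 2 + lam ^ 2) + INR v * ln ((sqrt (INR v ^ 2 + lam ^ 2) - INR v) / lam).

(* Main.v *)
Require Import Defs.
From Stdlib Require Import Reals Lra Lia ZArith.
From Coquelicot Require Import Coquelicot.
Open Scope R_scope.

Lemma nonneg_from_eps (f : R -> R) (df : R -> R) :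
  (forall x, 0 <= x -> is_derive f x (df x)) ->
  (forall x, 0 <= x -> 0 <= df x) -> f 0 = 0 ->
  forall z, 0 <= z -> 0 <= f z.
Proof.
intros Hd Hp H0 z Hz.
destruct (Req_dec z 0) as [->|Hz0]; [lra|].
destruct (Rle_or_lt 0 (f z)) as [H|H]; [exact H|].
exfalso.
set (e := - f z / (2 * z)).
assert (He : 0 < e) by (unfold e; apply Rdiv_lt_0_compat; lra).
assert (Hi := incr_function_le (fun t => f t + e * t) (Finite 0) p_infty
  (fun t => df t + e)).
assert (Hlt : f 0 + e * 0 < f z + e * z).
{ apply Hi; simpl; try lra; auto.
  - intros x Hx _. apply (is_derive_plus f (fun t => e * t)). apply Hd; auto.
    auto_derive; auto; ring.
  - intros x Hx _. specialize (Hp x Hx). lra. }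
unfold e in Hlt. rewrite H0 in Hlt. field_simplify in Hlt; try lra.
Qed.

Lemma ln_lb z : 0 <= z -> 2 * z / (2 + z) <= ln (1 + z).
Proof.
intros Hz.
assert (H := nonneg_from_eps (fun t => ln (1 + t) - 2 * t / (2 + t))
  (fun t => t ^ 2 / ((1 + t) * (2 + t) ^ 2))).
assert (0 <= ln (1 + z) - 2 * z / (2 + z)); [|lra].
apply H; auto.
- intros x Hx. auto_derive. lra. field. lra.
- intros x Hx. apply Rdiv_le_0_compat. nra. apply Rmult_lt_0_compat; nra.
- rewrite Rplus_0_r, ln_1. field.
Qed.

Lemma ln_ub z : 0 <= z -> ln (1 + z) <= z - z ^ 2 / 2 + z ^ 3 / 3.
Proof.
intros Hz.
assert (H := nonneg_from_eps (fun t => t - t ^ 2 / 2 + t ^ 3 / 3 - ln (1 + t))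
  (fun t => t ^ 3 / (1 + t))).
assert (0 <= z - z ^ 2 / 2 + z ^ 3 / 3 - ln (1 + z)); [|lra].
apply H; auto.
- intros x Hx. auto_derive. lra. field. lra.
- intros x Hx. apply Rdiv_le_0_compat. nra. lra.
- rewrite Rplus_0_r, ln_1. field.
Qed.

Lemma expLe x y : x <= y -> exp x <= exp y.
Proof. intros [H|H]. left; apply exp_increasing; auto. subst; lra. Qed.

Lemma exp_pow_n x n : exp x ^ n = exp (INR n * x).
Proof.
induction n. simpl. rewrite Rmult_0_l, exp_0; auto.
rewrite S_INR, <- tech_pow_Rmult, IHn, <- exp_plus. f_equal; ring.
Qed.

Lemma pow_sqrt_exp q m : 0 < q -> q ^ m * sqrt q = exp ((INR m + /2) * ln q).
Proof.
intros Hq.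
assert (Hs : 0 < sqrt q) by (apply sqrt_lt_R0; auto).
assert (Hl : ln q = 2 * ln (sqrt q)).
{ rewrite <- (sqrt_sqrt q) at 1 by lra. rewrite ln_mult by auto. ring. }
rewrite Rmult_plus_distr_r, exp_plus.
f_equal.
- rewrite <- exp_pow_n, exp_ln; auto.
- rewrite Hl. replace (/2 * (2 * ln (sqrt q))) with (ln (sqrt q)) by field.
  rewrite exp_ln; auto.
Qed.

Lemma Rm_bounds (m : nat) : (1 <= m)%nat ->
  exp 1 <= (1 + / INR m) ^ m * sqrt (1 + / INR m) <=
  exp 1 * exp (/ (2 * INR m * (INR m + 1))).
Proof.
intros Hm.
assert (Hm1 : 1 <= INR m) by (apply (le_INR 1); auto).
set (z := / INR m).
assert (Hz : 0 < z <= 1).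
{ unfold z; split. apply Rinv_0_lt_compat; lra.
  rewrite <- Rinv_1. apply Rinv_le_contravar; lra. }
assert (Hmz : INR m = / z) by (unfold z; rewrite Rinv_inv; auto).
rewrite pow_sqrt_exp by lra.
rewrite <- exp_plus. split; apply expLe.
- apply Rle_trans with ((INR m + /2) * (2 * z / (2 + z))).
  + rewrite Hmz. right. field. lra.
  + apply Rmult_le_compat_l. lra. apply ln_lb; lra.
- apply Rle_trans with ((INR m + /2) * (z - z ^ 2 / 2 + z ^ 3 / 3)).
  + apply Rmult_le_compat_l. lra. apply ln_ub; lra.
  + rewrite Hmz.
    replace ((/ z + / 2) * (z - z ^ 2 / 2 + z ^ 3 / 3)) with (1 + z^2/12 + z^3/6) by (field; lra).
    replace (/ (2 * / z * (/ z + 1))) with (z^2 / (2 * (1 + z))) by (field; lra).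
    assert (z ^ 2 / 12 + z ^ 3 / 6 <= z ^ 2 / (2 * (1 + z))); [|lra].
    apply Rmult_le_reg_r with (2 * (1 + z)). lra.
    field_simplify; try lra.
    assert (0 <= z^2) by nra. assert (z^3 <= z^2) by nra. assert (z^4 <= z^2) by nra. nra.
Qed.

Lemma stirling (m : nat) : (1 <= m)%nat ->
  INR m ^ m * sqrt (INR m) * exp (- INR m) * exp (/ (2 * INR m)) <= INR (Factorial.fact m) <=
  exp 1 * INR m ^ m * sqrt (INR m) * exp (- INR m).
Proof.
intros Hm. destruct m as [|m]; [lia|]. clear Hm.
induction m as [|m IH].
- assert (E1 : INR (Factorial.fact 1) = 1) by (simpl; lra).
  assert (E2 : INR 1 = 1) by (simpl; lra).
  rewrite E1, E2, sqrt_1, pow_1.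
  split.
  + replace (1 * 1 * exp (- (1)) * exp (/ (2 * 1))) with (exp (- (1) + / (2 * 1))) by (rewrite exp_plus; ring).
    apply Rle_trans with (exp 0); [apply expLe; lra | rewrite exp_0; lra].
  + rewrite !Rmult_1_r, <- exp_plus, Rplus_opp_r, exp_0; lra.
- set (n := S m) in *.
  assert (Hn1 : 1 <= INR n) by (apply (le_INR 1); unfold n; lia).
  assert (HS : INR (S n) = INR n + 1) by apply S_INR.
  assert (Hf : INR (Factorial.fact (S n)) = (INR n + 1) * INR (Factorial.fact n)).
  { rewrite fact_simpl, mult_INR, HS; auto. }
  destruct (Rm_bounds n) as [R1 R2]; [unfold n; lia|].
  set (q := 1 + / INR n) in *.
  assert (Hq : INR n + 1 = INR n * q) by (unfold q; field; lra).
  assert (Hpow : (INR n + 1) ^ n = INR n ^ n * q ^ n) by (rewrite Hq; apply Rpow_mult_distr).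
  assert (Hsq : sqrt (INR n + 1) = sqrt (INR n) * sqrt q).
  { rewrite Hq; apply sqrt_mult; unfold q; try lra.
    assert (0 < / INR n) by (apply Rinv_0_lt_compat; lra). lra. }
  assert (Hpn : 0 < INR n ^ n) by (apply pow_lt; lra).
  assert (Hsn : 0 < sqrt (INR n)) by (apply sqrt_lt_R0; lra).
  assert (Hen : 0 < exp (- INR n)) by apply exp_pos.
  assert (Hexp : exp (- (INR n + 1)) = exp (- INR n) * / exp 1).
  { rewrite Ropp_plus_distr, exp_plus, (exp_Ropp 1); reflexivity. }
  rewrite Hf, HS, <- tech_pow_Rmult, Hpow, Hsq, Hexp.
  destruct IH as [IH1 IH2].
  assert (He1 : 0 < exp 1) by apply exp_pos.
  set (P := INR n ^ n) in *. set (S0 := sqrt (INR n)) in *. set (X := exp (- INR n)) in *.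
  assert (Hqs : 0 < q ^ n * sqrt q) by lra.
  split.
  +
    assert (Hd : exp (/ (2 * INR n)) = exp (/ (2 * INR n * (INR n + 1))) * exp (/ (2 * (INR n + 1)))).
    { rewrite <- exp_plus. f_equal. field. lra. }
    rewrite Hd in IH1.
    set (A := exp (/ (2 * INR n * (INR n + 1)))) in *.
    set (B := exp (/ (2 * (INR n + 1)))) in *.
    assert (0 < A) by apply exp_pos. assert (0 < B) by apply exp_pos.
    set (Q := q ^ n * sqrt q) in *.
    assert (HQ : Q * / exp 1 <= A).
    { apply Rmult_le_reg_r with (exp 1); auto. rewrite Rmult_assoc, Rinv_l by lra. lra. }
    replace ((INR n + 1) * (P * q ^ n) * (S0 * sqrt q) * (X * / exp 1) * B)
      with ((INR n + 1) * ((P * S0 * X * B) * (Q * / exp 1))) by (unfold Q; ring).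
    apply Rmult_le_compat_l; [lra|].
    assert (0 < P * S0 * X * B) by (apply Rmult_lt_0_compat; [apply Rmult_lt_0_compat; [apply Rmult_lt_0_compat|]|]; assumption).
    apply Rle_trans with (P * S0 * X * B * A); [apply Rmult_le_compat_l; lra|].
    lra.
  + set (Q := q ^ n * sqrt q) in *.
    assert (HQ : 1 <= Q * / exp 1).
    { apply Rmult_le_reg_r with (exp 1); auto. rewrite Rmult_assoc, Rinv_l by lra. lra. }
    replace (exp 1 * ((INR n + 1) * (P * q ^ n)) * (S0 * sqrt q) * (X * / exp 1))
      with ((INR n + 1) * ((exp 1 * P * S0 * X) * (Q * / exp 1))) by (unfold Q; ring).
    apply Rmult_le_compat_l; [lra|].
    assert (0 < exp 1 * P * S0 * X) by (apply Rmult_lt_0_compat; [apply Rmult_lt_0_compat; [apply Rmult_lt_0_compat|]|]; assumption).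
    apply Rle_trans with (exp 1 * P * S0 * X); [lra|].
    rewrite <- (Rmult_1_r (exp 1 * P * S0 * X)) at 1. apply Rmult_le_compat_l; lra.
Qed.

Lemma stirL (m : nat) : (1 <= m)%nat ->
  INR m ^ m * sqrt (INR m) * exp (- INR m) <= INR (Factorial.fact m).
Proof.
intros Hm. destruct (stirling m Hm) as [H _].
assert (Hm1 : 1 <= INR m) by (apply (le_INR 1); auto).
assert (0 < INR m ^ m * sqrt (INR m) * exp (- INR m)).
{ apply Rmult_lt_0_compat; [apply Rmult_lt_0_compat|]. apply pow_lt; lra.
  apply sqrt_lt_R0; lra. apply exp_pos. }
assert (1 <= exp (/ (2 * INR m))).
{ rewrite <- exp_0. apply expLe. left; apply Rinv_0_lt_compat; lra. }
apply Rle_trans with (2 := H). rewrite <- (Rmult_1_r (_ * _ * _)) at 1.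
apply Rmult_le_compat_l; lra.
Qed.

Lemma fact_pos m : 0 < INR (Factorial.fact m).
Proof. apply INR_fact_lt_0. Qed.

Lemma pois_up_j x j : 0 < x -> (1 <= j)%nat ->
  x ^ j / INR (Factorial.fact j) <= exp x / sqrt (INR j).
Proof.
intros Hx Hj.
assert (HJ : 1 <= INR j) by (apply (le_INR 1); auto).
set (J := INR j) in *.
assert (HsJ : 0 < sqrt J) by (apply sqrt_lt_R0; lra).
assert (HJj : 0 < J ^ j) by (apply pow_lt; lra).
assert (HD : 0 < J ^ j * sqrt J * exp (- J)).
{ apply Rmult_lt_0_compat; [apply Rmult_lt_0_compat|]; auto. apply exp_pos. }
assert (Hst := stirL j Hj). fold J in Hst.
apply Rle_trans with (x ^ j / (J ^ j * sqrt J * exp (- J))).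
{ unfold Rdiv. apply Rmult_le_compat_l. left; apply pow_lt; auto.
  apply Rinv_le_contravar; auto. }
assert (Hxj : x ^ j = J ^ j * (x / J) ^ j).
{ rewrite <- Rpow_mult_distr. f_equal. field. lra. }
assert (Hp : (x / J) ^ j <= exp (x - J)).
{ apply Rle_trans with (exp (x / J - 1) ^ j).
  - apply pow_incr. split. left; apply Rdiv_lt_0_compat; lra.
    assert (H1 := exp_ineq1_le (x / J - 1)). lra.
  - rewrite exp_pow_n. right. f_equal. fold J. field. lra. }
rewrite Hxj.
replace (J ^ j * (x / J) ^ j / (J ^ j * sqrt J * exp (- J))) with
  ((x / J) ^ j * exp J / sqrt J).
2: { rewrite exp_Ropp. field. repeat split; try lra. apply Rgt_not_eq, exp_pos. }
unfold Rdiv. apply Rmult_le_compat_r. left; apply Rinv_0_lt_compat; auto.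
replace (exp x) with (exp (x - J) * exp J) by (rewrite <- exp_plus; f_equal; ring).
apply Rmult_le_compat_r. left; apply exp_pos. auto.
Qed.

Lemma floor_ex z : 0 <= z -> exists n : nat, INR n <= z < INR n + 1.
Proof.
intros Hz. destruct (base_Int_part z) as [H1 H2].
set (p := Int_part z) in *.
assert (Hp : (0 <= p)%Z).
{ assert (IZR (-1) < IZR p) by (simpl; lra). apply lt_IZR in H. lia. }
exists (Z.to_nat p). rewrite INR_IZR_INZ, Z2Nat.id by auto. lra.
Qed.

Lemma pois_mono x m d : 0 < x -> INR (m + d) <= x ->
  x ^ m / INR (Factorial.fact m) <= x ^ (m + d) / INR (Factorial.fact (m + d)).
Proof.
intros Hx. induction d as [|d IH]; intros Hd.
- rewrite Nat.add_0_r. lra.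
- rewrite Nat.add_succ_r in *.
  assert (IH' : INR (m + d) <= x) by (rewrite S_INR in Hd; lra).
  apply Rle_trans with (1 := IH IH').
  rewrite fact_simpl, mult_INR, <- tech_pow_Rmult.
  assert (Hf := fact_pos (m + d)).
  assert (HS : 0 < INR (S (m + d))) by (apply lt_0_INR; lia).
  replace (x * x ^ (m + d) / (INR (S (m + d)) * INR (Factorial.fact (m + d))))
    with (x ^ (m + d) / INR (Factorial.fact (m + d)) * (x / INR (S (m + d)))) by (field; lra).
  assert (0 <= x ^ (m + d) / INR (Factorial.fact (m + d))).
  { apply Rdiv_le_0_compat; [apply pow_le; lra | lra]. }
  assert (1 <= x / INR (S (m + d))).
  { apply Rmult_le_reg_r with (INR (S (m + d))); auto. field_simplify; lra. }
  rewrite <- (Rmult_1_r (x ^ (m + d) / _)) at 1. apply Rmult_le_compat_l; lra.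
Qed.

Lemma pois_up x m : 1 / 4 <= x ->
  x ^ m / INR (Factorial.fact m) <= sqrt 2 * exp x / sqrt x.
Proof.
intros Hx.
assert (Hsx : 0 < sqrt x) by (apply sqrt_lt_R0; lra).
assert (Hs2 : 1 <= sqrt 2) by (rewrite <- sqrt_1; apply sqrt_le_1_alt; lra).
assert (Hex := exp_pos x).
assert (Key : forall j, (1 <= j)%nat -> x / 2 <= INR j ->
          x ^ j / INR (Factorial.fact j) <= sqrt 2 * exp x / sqrt x).
{ intros j Hj Hxj. apply Rle_trans with (1 := pois_up_j x j ltac:(lra) Hj).
  assert (HJ : 1 <= INR j) by (apply (le_INR 1); auto).
  assert (Hsj : 0 < sqrt (INR j)) by (apply sqrt_lt_R0; lra).
  assert (sqrt x <= sqrt 2 * sqrt (INR j)).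
  { rewrite <- sqrt_mult by lra. apply sqrt_le_1_alt. lra. }
  unfold Rdiv. rewrite Rmult_assoc. rewrite (Rmult_comm (sqrt 2)).
  rewrite Rmult_assoc. apply Rmult_le_compat_l; [lra|].
  apply Rmult_le_reg_r with (sqrt x * sqrt (INR j)). nra.
  field_simplify; lra. }
destruct (Rlt_or_le x 2) as [Hx2|Hx2].
- apply Rle_trans with (exp x).
  + destruct m as [|m].
    * simpl. rewrite Rdiv_1_r. rewrite <- exp_0. apply expLe; lra.
    * apply Rle_trans with (1 := pois_up_j x (S m) ltac:(lra) ltac:(lia)).
      assert (HJ : 1 <= INR (S m)) by (apply (le_INR 1); lia).
      assert (1 <= sqrt (INR (S m))) by (rewrite <- sqrt_1; apply sqrt_le_1_alt; lra).
      apply Rmult_le_reg_r with (sqrt (INR (S m))). lra. field_simplify; nra.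
  + assert (sqrt x <= sqrt 2) by (apply sqrt_le_1_alt; lra).
    apply Rmult_le_reg_r with (sqrt x). lra. field_simplify; nra.
- destruct (floor_ex x) as [n [Hn1 Hn2]]; [lra|].
  assert (Hn : (1 <= n)%nat).
  { destruct n. simpl in Hn2. lra. lia. }
  destruct (le_lt_dec m n) as [Hmn|Hmn].
  + replace n with (m + (n - m))%nat in Hn1 by lia.
    apply Rle_trans with (1 := pois_mono x m (n - m) ltac:(lra) Hn1).
    replace (m + (n - m))%nat with n by lia.
    apply Key; auto. lra.
  + apply Key. lia. apply lt_INR in Hmn. lra.
Qed.

Lemma exp_ge1 x : 0 <= x -> 1 <= exp x.
Proof. intros H. apply Rle_trans with (exp 0); [rewrite exp_0; lra| apply expLe; lra]. Qed.

Lemma sqrt_ge1 x : 1 <= x -> 1 <= sqrt x.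
Proof. intros H. apply Rle_trans with (sqrt 1); [rewrite sqrt_1; lra| apply sqrt_le_1_alt; lra]. Qed.

Lemma pois_lo z n : 0 <= z -> INR n <= z < INR n + 1 ->
  exp z / (exp 1 * exp 1 * sqrt (z + 1)) <= z ^ n / INR (Factorial.fact n).
Proof.
intros Hz [Hn1 Hn2].
assert (He1 : 1 <= exp 1) by (apply exp_ge1; lra).
assert (Hs1 : 1 <= sqrt (z + 1)) by (apply sqrt_ge1; lra).
assert (Hez := exp_pos z).
destruct n as [|n].
- simpl in *. rewrite Rdiv_1_r.
  assert (exp z <= exp 1) by (apply expLe; lra).
  apply Rmult_le_reg_r with (exp 1 * exp 1 * sqrt (z + 1)). nra.
  field_simplify; try nra.
- set (N := S n) in *.
  assert (HN : 1 <= INR N) by (apply (le_INR 1); unfold N; lia).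
  destruct (stirling N ltac:(unfold N; lia)) as [_ Hst].
  assert (HsN : 0 < sqrt (INR N)) by (apply sqrt_lt_R0; lra).
  assert (HNN : 0 < INR N ^ N) by (apply pow_lt; lra).
  assert (HeN := exp_pos (- INR N)).
  assert (Hf := fact_pos N).
  assert (HD : 0 < exp 1 * INR N ^ N * sqrt (INR N) * exp (- INR N)).
  { apply Rmult_lt_0_compat; [apply Rmult_lt_0_compat; [apply Rmult_lt_0_compat|]|]; lra. }
  apply Rle_trans with (z ^ N / (exp 1 * INR N ^ N * sqrt (INR N) * exp (- INR N))).
  2: { unfold Rdiv. apply Rmult_le_compat_l. apply pow_le; lra.
       apply Rinv_le_contravar; auto. }
  assert (Hzn : INR N ^ N <= z ^ N) by (apply pow_incr; lra).
  apply Rle_trans with (INR N ^ N / (exp 1 * INR N ^ N * sqrt (INR N) * exp (- INR N))).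
  2: { unfold Rdiv. apply Rmult_le_compat_r; auto. left; apply Rinv_0_lt_compat; auto. }
  replace (INR N ^ N / (exp 1 * INR N ^ N * sqrt (INR N) * exp (- INR N)))
    with (exp (INR N) / (exp 1 * sqrt (INR N))).
  2: { rewrite exp_Ropp. assert (exp (INR N) <> 0) by apply Rgt_not_eq, exp_pos.
       assert (exp 1 <> 0) by apply Rgt_not_eq, exp_pos. field. repeat split; lra. }
  assert (exp z <= exp 1 * exp (INR N)) by (rewrite <- exp_plus; apply expLe; lra).
  assert (sqrt (INR N) <= sqrt (z + 1)) by (apply sqrt_le_1_alt; lra).
  assert (0 < exp (INR N)) by apply exp_pos.
  assert (He0 := exp_pos 1).
  apply Rle_trans with (exp 1 * exp (INR N) / (exp 1 * exp 1 * sqrt (z + 1))).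
  { unfold Rdiv. apply Rmult_le_compat_r; auto. left; apply Rinv_0_lt_compat.
    apply Rmult_lt_0_compat; [apply Rmult_lt_0_compat|]; lra. }
  replace (exp 1 * exp (INR N) / (exp 1 * exp 1 * sqrt (z + 1))) with
    (exp (INR N) / (exp 1 * sqrt (z + 1))) by (field; lra).
  unfold Rdiv. apply Rmult_le_compat_l; [lra|].
  apply Rinv_le_contravar. apply Rmult_lt_0_compat; lra.
  apply Rmult_le_compat_l; lra.
Qed.

Lemma series_ge0 (a : nat -> R) : (forall n, 0 <= a n) -> ex_series a -> 0 <= Series a.
Proof.
intros Ha Hex.
assert (H := Series_le (fun n => 0 * a n) a).
rewrite Series_scal_l, Rmult_0_l in H. apply H; auto.
intros n; rewrite Rmult_0_l; split; [lra | apply Ha].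
Qed.

Lemma series_ge_term (a : nat -> R) k : (forall n, 0 <= a n) -> ex_series a -> a k <= Series a.
Proof.
revert a. induction k as [|k IH]; intros a Ha Hex.
- rewrite Series_incr_1 by auto.
  assert (0 <= Series (fun k => a (S k))).
  { apply series_ge0. intros; apply Ha. apply (proj1 (ex_series_incr_1 a)); auto. }
  lra.
- rewrite Series_incr_1 by auto.
  assert (a (S k) <= Series (fun k => a (S k))).
  { apply (IH (fun k => a (S k))). intros; apply Ha. apply (proj1 (ex_series_incr_1 a)); auto. }
  specialize (Ha 0%nat). lra.
Qed.

Lemma E_term_eq v lam k x y : 0 < lam -> x * y = lam ^ 2 / 4 ->
  E_term v lam k = (2 * y / lam) ^ v * (x ^ (v + k) / INR (Factorial.fact (v + k)))
                   * (y ^ k / INR (Factorial.fact k)).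
Proof.
intros Hl Hxy.
unfold E_term, Binomial.C.
replace (v + 2 * k - k)%nat with (v + k)%nat by lia.
assert (H1 := fact_pos (v + 2 * k)). assert (H2 := fact_pos (v + k)).
assert (H3 := fact_pos k).
assert (Hp : 0 < 2 ^ (v + 2 * k)) by (apply pow_lt; lra).
assert (Key : lam ^ (v + 2 * k) = 2 ^ (v + 2 * k) *
   ((2 * y / lam) ^ v * x ^ (v + k) * y ^ k)).
{ rewrite !pow_add, pow_mult.
  replace ((2 * y / lam) ^ v * (x ^ v * x ^ k) * y ^ k) with
    (((2 * y / lam) * x) ^ v * (x * y) ^ k) by (rewrite !Rpow_mult_distr; ring).
  rewrite Hxy.
  replace (2 * y / lam * x) with (lam / 2).
  2: { replace (2 * y / lam * x) with (2 * (x * y) / lam) by (field; lra). rewrite Hxy. field; lra. }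
  replace (lam ^ 2 / 4) with ((lam / 2) ^ 2) by (field).
  rewrite pow_mult. unfold Rdiv. rewrite !Rpow_mult_distr, !pow_inv.
  assert (0 < 2 ^ v) by (apply pow_lt; lra).
  assert (0 < (2 ^ 2) ^ k) by (apply pow_lt; apply pow_lt; lra).
  assert (0 < (2 ^ 2)) by (apply pow_lt; lra).
  field. split; lra. }
rewrite Key. field. repeat split; lra.
Qed.

Lemma main_bounds (v : nat) (lam : R) : 1 / 2 <= lam ->
  / (3 * (exp 1 * exp 1 * (exp 1 * exp 1))) / (INR v + lam) * exp (Psi v lam) <= E v lam /\
  E v lam <= 2 / sqrt lam * exp (Psi v lam).
Proof.
intros Hl.
assert (HV : 0 <= INR v) by apply pos_INR.
set (V := INR v) in *.
set (s := sqrt (V ^ 2 + lam ^ 2)).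
assert (Hs0 : 0 <= s) by apply sqrt_pos.
assert (Hss : s * s = V ^ 2 + lam ^ 2) by (apply sqrt_sqrt; nra).
assert (HsV : V < s) by nra.
assert (Hsl : lam <= s) by nra.
assert (HsVl : s <= V + lam) by nra.
set (x := (s + V) / 2). set (y := (s - V) / 2).
assert (Hy : 0 < y) by (unfold y; lra).
assert (Hx : lam / 2 <= x) by (unfold x; lra).
assert (Hxy : x * y = lam ^ 2 / 4) by (unfold x, y; nra).
assert (HxyV : x = V + y) by (unfold x, y; lra).
assert (Hlam : 0 < lam) by lra.
set (c0 := (2 * y / lam) ^ v).
assert (Hc0 : 0 < c0) by (apply pow_lt, Rdiv_lt_0_compat; lra).
assert (HPsi : exp (Psi v lam) = c0 * (exp x * exp y)).
{ unfold Psi. fold V. fold s. rewrite <- exp_plus.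
  replace (x + y) with s by (unfold x, y; lra).
  replace ((s - V) / lam) with (2 * y / lam) by (unfold y; field; lra).
  rewrite exp_plus. unfold c0. rewrite Rmult_comm. f_equal.
  rewrite <- (exp_ln ((2 * y / lam) ^ v)) by (apply pow_lt, Rdiv_lt_0_compat; lra).
  f_equal. rewrite ln_pow. reflexivity. apply Rdiv_lt_0_compat; lra. }
assert (Hterm : forall k, E_term v lam k = c0 * (x ^ (v + k) / INR (Factorial.fact (v + k)))
                   * (y ^ k / INR (Factorial.fact k))).
{ intros k. apply E_term_eq; auto. }
assert (Hpos : forall k, 0 <= E_term v lam k).
{ intros k. rewrite Hterm. assert (H1 := fact_pos (v + k)). assert (H2 := fact_pos k).
  apply Rmult_le_pos; [apply Rmult_le_pos|]; try lra;
  apply Rdiv_le_0_compat; auto; apply pow_le; lra. }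
set (M := sqrt 2 * exp x / sqrt x).
set (b := fun n => c0 * M * (/ INR (Factorial.fact n) * y ^ n)).
assert (Hb : is_series b (c0 * M * exp y)).
{ assert (H := is_exp_Reals y). apply is_pseries_R in H.
  apply (is_series_scal_l (c0 * M)) in H. exact H. }
assert (Hbex : ex_series b) by (exists (c0 * M * exp y); auto).
assert (Hle : forall k, E_term v lam k <= b k).
{ intros k. rewrite Hterm. unfold b.
  assert (H1 := pois_up x (v + k) ltac:(lra)). fold M in H1.
  assert (H2 := fact_pos k).
  assert (0 <= y ^ k / INR (Factorial.fact k)) by (apply Rdiv_le_0_compat; auto; apply pow_le; lra).
  replace (c0 * M * (/ INR (Factorial.fact k) * y ^ k)) with (c0 * M * (y ^ k / INR (Factorial.fact k))) by (unfold Rdiv; ring).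
  apply Rmult_le_compat_r; auto. apply Rmult_le_compat_l; lra. }
assert (Hex : ex_series (E_term v lam)).
{ apply (ex_series_le (E_term v lam) b); auto. intros n.
  change (norm (E_term v lam n)) with (Rabs (E_term v lam n)).
  rewrite Rabs_pos_eq; auto. }
split.
-
  destruct (floor_ex y) as [k [Hk1 Hk2]]; [lra|].
  unfold E. apply Rle_trans with (2 := series_ge_term _ k Hpos Hex).
  rewrite Hterm.
  assert (Lx := pois_lo x (v + k) ltac:(lra) ltac:(rewrite plus_INR; fold V; lra)).
  assert (Ly := pois_lo y k ltac:(lra) ltac:(lra)).
  set (e := exp 1) in *. assert (He : 0 < e) by apply exp_pos.
  assert (Hsx : 1 <= sqrt (x + 1)) by (apply sqrt_ge1; lra).
  assert (Hsy : 1 <= sqrt (y + 1)) by (apply sqrt_ge1; lra).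
  assert (HQ : sqrt (x + 1) * sqrt (y + 1) <= 3 * (V + lam)).
  { rewrite <- sqrt_mult by lra. rewrite <- (sqrt_square (3 * (V + lam))) by lra.
    apply sqrt_le_1_alt. replace ((x + 1) * (y + 1)) with (x * y + (x + y) + 1) by ring.
    rewrite Hxy. replace (x + y) with s by (unfold x, y; lra). nra. }
  assert (Hex0 := exp_pos x). assert (Hey0 := exp_pos y).
  set (px := x ^ (v + k) / INR (Factorial.fact (v + k))) in *.
  set (py := y ^ k / INR (Factorial.fact k)) in *.
  assert (Hlo1 : 0 <= exp x / (e * e * sqrt (x + 1))).
  { apply Rdiv_le_0_compat; [lra|]. apply Rmult_lt_0_compat; [apply Rmult_lt_0_compat|]; lra. }
  assert (Hlo2 : 0 <= exp y / (e * e * sqrt (y + 1))).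
  { apply Rdiv_le_0_compat; [lra|]. apply Rmult_lt_0_compat; [apply Rmult_lt_0_compat|]; lra. }
  apply Rle_trans with (c0 * (exp x / (e * e * sqrt (x + 1))) * (exp y / (e * e * sqrt (y + 1)))).
  2: { apply Rmult_le_compat; try lra. apply Rmult_le_pos; lra. apply Rmult_le_compat_l; lra. }
  rewrite HPsi.
  assert (HVl : 0 < V + lam) by lra.
  set (Q := sqrt (x + 1) * sqrt (y + 1)) in *.
  replace (c0 * (exp x / (e * e * sqrt (x + 1))) * (exp y / (e * e * sqrt (y + 1))))
    with ((c0 * (exp x * exp y)) / (e * e * (e * e)) * / Q) by (unfold Q; field; repeat split; lra).
  replace (/ (3 * (e * e * (e * e))) / (V + lam) * (c0 * (exp x * exp y)))
    with ((c0 * (exp x * exp y)) / (e * e * (e * e)) * / (3 * (V + lam))) by (field; repeat split; lra).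
  assert (0 < c0 * (exp x * exp y) / (e * e * (e * e))).
  { assert (0 < e * e) by (apply Rmult_lt_0_compat; lra).
    apply Rdiv_lt_0_compat. apply Rmult_lt_0_compat; [lra| apply Rmult_lt_0_compat; lra].
    apply Rmult_lt_0_compat; lra. }
  apply Rmult_le_compat_l; [lra|]. apply Rinv_le_contravar; auto. unfold Q; nra.
-
  unfold E. apply Rle_trans with (Series b).
  { apply Series_le; auto. }
  rewrite (is_series_unique b _ Hb).
  rewrite HPsi. unfold M.
  assert (Hsx : 0 < sqrt x) by (apply sqrt_lt_R0; lra).
  assert (Hsl0 : 0 < sqrt lam) by (apply sqrt_lt_R0; lra).
  assert (Hs2 : sqrt 2 * sqrt 2 = 2) by (apply sqrt_sqrt; lra).
  assert (Hs20 : 0 < sqrt 2) by (apply sqrt_lt_R0; lra).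
  assert (Hlx : sqrt lam <= sqrt 2 * sqrt x) by (rewrite <- sqrt_mult by lra; apply sqrt_le_1_alt; lra).
  assert (H : sqrt 2 / sqrt x <= 2 / sqrt lam).
  { replace (sqrt 2 / sqrt x) with (2 / (sqrt 2 * sqrt x)) by (field_simplify_eq; [rewrite pow2_sqrt; lra | lra]).
    unfold Rdiv. apply Rmult_le_compat_l; [lra|]. apply Rinv_le_contravar; auto. }
  assert (HE : 0 < c0 * (exp x * exp y)).
  { apply Rmult_lt_0_compat; auto. apply Rmult_lt_0_compat; apply exp_pos. }
  replace (c0 * (sqrt 2 * exp x / sqrt x) * exp y) with (sqrt 2 / sqrt x * (c0 * (exp x * exp y))) by (field; lra).
  apply Rmult_le_compat_r; lra.
Qed.

Theorem proposition4p2 :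
  exists C c : R, 0 < C /\ 0 < c /\
    forall (v : nat) (lam : R), 1 / 2 <= lam ->
      (INR v >= lam ->
         c / (INR v + lam) * exp (Psi v lam) <= E v lam /\
         E v lam <= C * (INR v + lam) * exp (Psi v lam)) /\
      (INR v <= lam ->
         c / (INR v + lam) * exp (Psi v lam) <= E v lam /\
         E v lam <= C / sqrt lam * exp (Psi v lam)).
Proof.
exists 8, (/ (3 * (exp 1 * exp 1 * (exp 1 * exp 1)))).
assert (He := exp_pos 1).
split; [lra|]. split.
{ apply Rinv_0_lt_compat. assert (0 < exp 1 * exp 1) by (apply Rmult_lt_0_compat; lra).
  apply Rmult_lt_0_compat; [lra|]. apply Rmult_lt_0_compat; lra. }
intros v lam Hl.
destruct (main_bounds v lam Hl) as [L U].
assert (HV : 0 <= INR v) by apply pos_INR.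
assert (HeP := exp_pos (Psi v lam)).
assert (Hsl : 1 / 2 <= sqrt lam).
{ rewrite <- (sqrt_square (1/2)) by lra. apply sqrt_le_1_alt. lra. }
assert (Hsl0 : 0 < sqrt lam) by lra.
split; intros _; split; auto.
- apply Rle_trans with (1 := U). apply Rmult_le_compat_r; [lra|].
  apply Rle_trans with 4.
  + apply Rmult_le_reg_r with (sqrt lam); auto. field_simplify; lra.
  + lra.
- apply Rle_trans with (1 := U). apply Rmult_le_compat_r; [lra|].
  unfold Rdiv. apply Rmult_le_compat_r. left; apply Rinv_0_lt_compat; auto. lra.
Qed.
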